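(* In the setting below, let $N=\lim_{t\to\infty}(S+tP)^{-1}$ for a signless Laplacian $P$ with graph $G$, and let $G_1,\dots,G_k$ be the connected components of $G$. For $i,j\in\{1,\dots,k\}$ let $N[i,j]$ be the submatrix of $N$ with rows indexed by the vertices of $G_i$ and columns indexed by the vertices of $G_j$. Then: (1) within each block $N[i,j]$ all entries are equal up to sign; (2) if $G_i$ is not bipartite then $N[i,j]=N[j,i]=0$ for all $j$; in particular $N=0$ if and only if no component of $G$ is bipartite; (3) if $G_i$ is bipartite with classes of sizes $p_i,q_i$ and $G_j$ is bipartite with classes of sizes $p_j,q_j$, then, ordering the vertices of each of $G_i,G_j$ so that the class of size $p$ comes first, $$N[i,j]=c_{ij}\begin{pmatrix}\mathbf{1}_{p_i}\mathbf{1}_{p_j}^\top&-\mathbf{1}_{p_i}\mathbf{1}_{q_j}^\top\\-\mathbf{1}_{q_i}\mathbf{1}_{p_j}^\top&\mathbf{1}_{q_i}\mathbf{1}_{q_j}^\top\end{pmatrix}$$ for some constant $c_{ij}\in\mathbb{R}$.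
   Context: Let $n\ge3$, $\ell>0$, $\alpha\ge(n-2)\ell$, and $S=\alpha I_n+\ell\mathbf{1}_n\mathbf{1}_n^\top$. For a real matrix $P$, $\Delta_i(P)=|P_{ii}|-\sum_{j\ne i}|P_{ij}|$. A signless Laplacian is a real symmetric $n\times n$ matrix $P$ with $P_{ij}\in\{0,1\}$ for $i\ne j$, $P_{ii}\ge 0$, and $\Delta_i(P)\in\{0,2\}$ for all $i$. Its graph $G$ has vertex set $\{1,\dots,n\}$, an edge $\{i,j\}$ ($i\ne j$) whenever $P_{ij}=1$, and a self-loop $\{i,i\}$ whenever $\Delta_i(P)=2$. A graph with a self-loop is not bipartite. The limit $N$ exists. *)

(* Defs.v *)
(* real matrices as functions nat -> nat -> R, indices < n. *)
From Stdlib Require Import Reals Lra Arith.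
Open Scope R_scope.

Fixpoint rsum (n : nat) (f : nat -> R) : R :=
  match n with O => 0 | S k => rsum k f + f k end.

Definition mat := nat -> nat -> R.

Definition mmul (n : nat) (A B : mat) : mat :=
  fun i j => rsum n (fun k => A i k * B k j).

Definition madd (A B : mat) : mat := fun i j => A i j + B i j.
Definition mscale (t : R) (A : mat) : mat := fun i j => t * A i j.
Definition idm : mat := fun i j => if Nat.eqb i j then 1 else 0.

Definition Smat (alpha l : R) : mat :=
  fun i j => alpha * idm i j + l.

Definition is_inverse (n : nat) (A X : mat) : Prop :=
  forall i j, (i < n)%nat -> (j < n)%nat ->
    mmul n A X i j = idm i j /\ mmul n X A i j = idm i j.

Definition Delta (n : nat) (P : mat) (i : nat) : R :=
  Rabs (P i i) - rsum n (fun j => if Nat.eqb j i then 0 else Rabs (P i j)).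

Definition signless_laplacian (n : nat) (P : mat) : Prop :=
  forall i j, (i < n)%nat -> (j < n)%nat ->
    P i j = P j i /\
    (i <> j -> P i j = 0 \/ P i j = 1) /\
    0 <= P i i /\
    (Delta n P i = 0 \/ Delta n P i = 2).

(* edge relation of the graph G of P (including self-loops) *)
Definition gedge (n : nat) (P : mat) (u v : nat) : Prop :=
  (u < n)%nat /\ (v < n)%nat /\
  ((u <> v /\ P u v = 1) \/ (u = v /\ Delta n P u = 2)).

Inductive gconn (n : nat) (P : mat) (u : nat) : nat -> Prop :=
  | gconn_refl : (u < n)%nat -> gconn n P u u
  | gconn_step : forall v w, gconn n P u v -> gedge n P v w -> gconn n P u w.

(* col is a proper 2-colouring of the component of a (a self-loop makes this impossible) *)
Definition bipartition (n : nat) (P : mat) (a : nat) (col : nat -> bool) : Prop :=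
  forall u v, gconn n P a u -> gconn n P a v -> gedge n P u v -> col u <> col v.

Definition comp_bipartite (n : nat) (P : mat) (a : nat) : Prop :=
  exists col, bipartition n P a col.

Definition sgn (b : bool) : R := if b then 1 else -1.

Definition mlim_infty (n : nat) (X : R -> mat) (N : mat) : Prop :=
  forall i j, (i < n)%nat -> (j < n)%nat ->
    forall eps, 0 < eps -> exists T, forall t, T <= t -> Rabs (X t i j - N i j) < eps.

(* Main.v *)
Require Import Defs.
From Stdlib Require Import Reals.
From Stdlib Require Import Lra Lia Arith ClassicalEpsilon.
Open Scope R_scope.


Lemma rsum_ext n f g : (forall k, (k < n)%nat -> f k = g k) -> rsum n f = rsum n g.
Proof. induction n; simpl; intros H; auto. rewrite IHn by (intros; apply H; lia). rewrite H by lia. reflexivity. Qed.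

Lemma rsum_scal n c f : rsum n (fun k => c * f k) = c * rsum n f.
Proof. induction n; simpl; [ring|]. rewrite IHn; ring. Qed.

Lemma rsum_scalr n c f : rsum n (fun k => f k * c) = rsum n f * c.
Proof. induction n; simpl; [ring|]. rewrite IHn; ring. Qed.

Lemma rsum_lin2 n t F G : rsum n (fun k => F k + t * G k) = rsum n F + t * rsum n G.
Proof. induction n; simpl; [ring|]. rewrite IHn; ring. Qed.

Lemma lin3 n a b c f g h : rsum n (fun k => a * f k + b * g k + c * h k) = a * rsum n f + b * rsum n g + c * rsum n h.
Proof. induction n; simpl; [ring|]. rewrite IHn; ring. Qed.

Lemma lin_sum2 n c F G H : rsum n (fun i => F i + c * (G i - H i)) = rsum n F + c * (rsum n G - rsum n H).
Proof. induction n; simpl; [ring|]. rewrite IHn; ring. Qed.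

Lemma rsum_zero n f : (forall k, (k<n)%nat -> f k = 0) -> rsum n f = 0.
Proof. induction n; simpl; intros H; auto. rewrite IHn by (intros; apply H; lia). rewrite H by lia. ring. Qed.

Lemma rsum_swap n m F : rsum n (fun i => rsum m (fun k => F i k)) = rsum m (fun k => rsum n (fun i => F i k)).
Proof. induction n; simpl. symmetry; apply rsum_zero; auto.
  rewrite IHn. clear IHn. induction m; simpl; [ring|]. rewrite <- IHm. ring. Qed.

Lemma rsum_nonneg n f : (forall k, (k<n)%nat -> 0 <= f k) -> 0 <= rsum n f.
Proof. induction n; simpl; intros H; [lra|]. pose proof (IHn (fun k Hk => H k ltac:(lia))). pose proof (H n ltac:(lia)). lra. Qed.

Lemma rsum_nonneg_zero n f : (forall k, (k<n)%nat -> 0 <= f k) -> rsum n f = 0 -> forall k, (k<n)%nat -> f k = 0.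
Proof. induction n; simpl; intros H Hs k Hk; [lia|].
  pose proof (rsum_nonneg n f (fun k Hk => H k ltac:(lia))). pose proof (H n ltac:(lia)).
  destruct (Nat.eq_dec k n). subst; lra. apply IHn; [intros; apply H; lia| lra | lia]. Qed.

Lemma rsum_split_at n f i : (i < n)%nat -> rsum n f = f i + rsum n (fun k => if Nat.eqb k i then 0 else f k).
Proof. induction n; intros Hi; [lia|]. simpl.
  destruct (Nat.eq_dec i n).
  - subst. rewrite Nat.eqb_refl. rewrite (rsum_ext n (fun k => if Nat.eqb k n then 0 else f k) f). ring.
    intros k Hk. destruct (Nat.eqb_spec k n); [lia|auto].
  - rewrite IHn by lia. destruct (Nat.eqb_spec n i); [lia|]. ring. Qed.

Lemma rsum_delta n i c : (i < n)%nat -> rsum n (fun k => idm i k * c k) = c i.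
Proof. intros Hi. rewrite (rsum_split_at n _ i Hi). cbv beta. unfold idm at 1. rewrite Nat.eqb_refl.
  rewrite rsum_zero. ring. intros k Hk. destruct (Nat.eqb_spec k i). auto. unfold idm. destruct (Nat.eqb_spec i k); [lia|ring]. Qed.

Definition lim (f : R -> R) (L : R) := forall eps, 0 < eps -> exists T, forall t, T <= t -> Rabs (f t - L) < eps.

Lemma lim_const c : lim (fun _ => c) c.
Proof. intros eps He. exists 0. intros. unfold Rminus. rewrite Rplus_opp_r, Rabs_R0. auto. Qed.

Lemma lim_plus f g L1 L2 : lim f L1 -> lim g L2 -> lim (fun t => f t + g t) (L1 + L2).
Proof. intros H1 H2 eps He. destruct (H1 (eps/2)) as [T1 HT1]; [lra|]. destruct (H2 (eps/2)) as [T2 HT2]; [lra|].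
  exists (Rmax T1 T2). intros t Ht. specialize (HT1 t (Rle_trans _ _ _ (Rmax_l T1 T2) Ht)).
  specialize (HT2 t (Rle_trans _ _ _ (Rmax_r T1 T2) Ht)).
  replace (f t + g t - (L1 + L2)) with ((f t - L1) + (g t - L2)) by ring.
  eapply Rle_lt_trans; [apply Rabs_triang|lra]. Qed.

Lemma lim_mull c f L : lim f L -> lim (fun t => c * f t) (c * L).
Proof. intros H eps He. pose proof (Rabs_pos c).
  destruct (H (eps / (Rabs c + 1))) as [T HT]. apply Rdiv_lt_0_compat; lra.
  exists T. intros t Ht. specialize (HT t Ht).
  replace (c * f t - c * L) with (c * (f t - L)) by ring. rewrite Rabs_mult.
  set (q := eps / (Rabs c + 1)) in *. assert (Hq : q * (Rabs c + 1) = eps) by (unfold q; field; lra).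
  pose proof (Rabs_pos (f t - L)). nra. Qed.

Lemma lim_mulr c f L : lim f L -> lim (fun t => f t * c) (L * c).
Proof. intros H. pose proof (lim_mull c f L H) as H'. intros eps He. destruct (H' eps He) as [T HT].
  exists T. intros t Ht. rewrite (Rmult_comm (f t)), (Rmult_comm L). auto. Qed.

Lemma lim_minus f g L1 L2 : lim f L1 -> lim g L2 -> lim (fun t => f t - g t) (L1 - L2).
Proof. intros H1 H2. pose proof (lim_plus f _ L1 _ H1 (lim_mull (-1) g L2 H2)) as H.
  intros eps He. destruct (H eps He) as [T HT]. exists T. intros t Ht. specialize (HT t Ht).
  replace (f t - g t - (L1 - L2)) with (f t + -1 * g t - (L1 + -1 * L2)) by ring. auto. Qed.

Lemma lim_ext_ev T0 f g L : (forall t, T0 <= t -> f t = g t) -> lim f L -> lim g L.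
Proof. intros He H eps Hp. destruct (H eps Hp) as [T HT]. exists (Rmax T T0). intros t Ht.
  rewrite <- He by (eapply Rle_trans; [apply Rmax_r|eauto]). apply HT. eapply Rle_trans; [apply Rmax_l|eauto]. Qed.

Lemma lim_rsum n F L : (forall k, (k < n)%nat -> lim (fun t => F t k) (L k)) ->
  lim (fun t => rsum n (F t)) (rsum n L).
Proof. induction n; intros H; simpl. apply lim_const.
  apply (lim_plus (fun t => rsum n (F t)) (fun t => F t n)). apply IHn; intros; apply H; lia. apply H; lia. Qed.

Lemma lim_unique_const c L : lim (fun _ => c) L -> c = L.
Proof. intros H. destruct (Req_dec c L); auto. destruct (H (Rabs (c - L))) as [T HT].
  apply Rabs_pos_lt; lra. specialize (HT T (Rle_refl T)). lra. Qed.

Lemma lim_tf f L M : lim f L -> lim (fun t => t * f t) M -> L = 0.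
Proof. intros H1 H2. destruct (Req_dec L 0) as [|HL]; auto. exfalso.
  assert (Ha: 0 < Rabs L) by (apply Rabs_pos_lt; auto).
  destruct (H1 (Rabs L / 2)) as [T1 HT1]; [lra|].
  destruct (H2 1) as [T2 HT2]; [lra|].
  set (q := 2 * (Rabs M + 1) / Rabs L).
  assert (Hq : q * Rabs L = 2 * (Rabs M + 1)) by (unfold q; field; lra).
  set (t := Rmax (Rmax T1 T2) (Rmax 1 q)).
  assert (t1 : T1 <= t) by (unfold t; eapply Rle_trans; [apply Rmax_l|apply Rmax_l]).
  assert (t2 : T2 <= t) by (unfold t; eapply Rle_trans; [apply Rmax_r|apply Rmax_l]).
  assert (t3 : 1 <= t) by (unfold t; eapply Rle_trans; [apply Rmax_l|apply Rmax_r]).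
  assert (t4 : q <= t) by (unfold t; eapply Rle_trans; [apply Rmax_r|apply Rmax_r]).
  specialize (HT1 t t1). specialize (HT2 t t2).
  pose proof (Rabs_triang_inv L (f t)). rewrite Rabs_minus_sym in HT1.
  pose proof (Rabs_triang_inv (t * f t) M).
  rewrite Rabs_mult, (Rabs_right t) in * by lra.
  pose proof (Rabs_pos M).
  assert (A1 : t * Rabs (f t) > t * (Rabs L / 2)) by (apply Rmult_lt_compat_l; lra).
  assert (A2 : t * Rabs L >= q * Rabs L) by (apply Rle_ge, Rmult_le_compat_r; lra).
  lra. Qed.

Definition Eoff (P : mat) (i k : nat) : R := if Nat.eqb k i then 0 else P i k.

Lemma Eoff_01 n P i k : signless_laplacian n P -> (i<n)%nat -> (k<n)%nat -> Eoff P i k = 0 \/ Eoff P i k = 1.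
Proof. intros HS Hi Hk. unfold Eoff. destruct (Nat.eqb_spec k i); [left;auto|].
  destruct (HS i k Hi Hk) as (_&H2&_). apply H2; auto. Qed.

Lemma Eoff_sym n P i k : signless_laplacian n P -> (i<n)%nat -> (k<n)%nat -> Eoff P i k = Eoff P k i.
Proof. intros HS Hi Hk. unfold Eoff. destruct (Nat.eqb_spec k i), (Nat.eqb_spec i k); try lia; auto.
  apply (HS i k Hi Hk). Qed.

Lemma Delta_Eoff n P i : signless_laplacian n P -> (i<n)%nat -> Defs.Delta n P i = P i i - rsum n (Eoff P i).
Proof. intros HS Hi. unfold Defs.Delta. destruct (HS i i Hi Hi) as (_&_&Hp&_). rewrite (Rabs_right (P i i)) by lra.
  f_equal. apply rsum_ext. intros k Hk. unfold Eoff. destruct (Nat.eqb_spec k i); auto.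
  destruct (HS i k Hi Hk) as (_&H2&_). destruct (H2 (not_eq_sym n0)) as [E|E]; rewrite E; [apply Rabs_R0|apply Rabs_R1]. Qed.

Lemma split_P n P x i : (i<n)%nat -> rsum n (fun k => P i k * x k) = P i i * x i + rsum n (fun k => Eoff P i k * x k).
Proof. intros Hi. rewrite (rsum_split_at n (fun k => P i k * x k) i Hi); cbv beta. f_equal.
  apply rsum_ext; intros; unfold Eoff; destruct Nat.eqb; ring. Qed.

Lemma kernel n P x : signless_laplacian n P ->
  (forall i, (i<n)%nat -> rsum n (fun k => P i k * x k) = 0) ->
  forall u w, gedge n P u w -> x w = - x u.
Proof.
  intros HS HK.
  set (T := fun i => Defs.Delta n P i * x i ^ 2 + / 2 * rsum n (fun k => Eoff P i k * (x i + x k)^2)).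
  assert (Hpt: forall i, (i<n)%nat -> T i = x i * rsum n (fun k => P i k * x k) + /2 * (rsum n (fun k => Eoff P i k * x k ^2) - rsum n (fun k => Eoff P i k * x i ^ 2))).
  { intros i Hi. unfold T; cbv beta. rewrite Delta_Eoff by auto. rewrite (split_P n P x i Hi).
    assert (E1: rsum n (fun k => Eoff P i k * (x i + x k)^2) = x i ^2 * rsum n (Eoff P i) + 2 * x i * rsum n (fun k => Eoff P i k * x k) + 1 * rsum n (fun k => Eoff P i k * x k ^2)).
    { rewrite <- lin3. apply rsum_ext; intros; ring. }
    assert (E2: rsum n (fun k => Eoff P i k * x i ^ 2) = x i ^2 * rsum n (Eoff P i)).
    { rewrite <- rsum_scal. apply rsum_ext; intros; ring. }
    rewrite E1, E2. field. }
  assert (Hsum: rsum n T = 0).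
  { rewrite (rsum_ext n T (fun i => x i * rsum n (fun k => P i k * x k) + /2 * (rsum n (fun k => Eoff P i k * x k ^2) - rsum n (fun k => Eoff P i k * x i ^ 2)))) by exact Hpt.
    rewrite lin_sum2.
    rewrite (rsum_zero n (fun i => x i * rsum n (fun k => P i k * x k))) by (intros; rewrite HK by auto; ring).
    assert (Sw: rsum n (fun i => rsum n (fun k => Eoff P i k * x k ^2)) = rsum n (fun i => rsum n (fun k => Eoff P i k * x i ^ 2))).
    { rewrite rsum_swap. apply rsum_ext; intros k Hk. apply rsum_ext; intros i Hi.
      rewrite (Eoff_sym n P i k) by auto. reflexivity. }
    rewrite Sw. field. }
  assert (Enn: forall i k, (i<n)%nat -> (k<n)%nat -> 0 <= Eoff P i k * (x i + x k)^2).
  { intros i k Hi Hk. destruct (Eoff_01 n P i k HS Hi Hk) as [E|E]; rewrite E; [lra| pose proof (pow2_ge_0 (x i + x k)); lra]. }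
  assert (Dnn: forall i, (i<n)%nat -> 0 <= Defs.Delta n P i).
  { intros i Hi. destruct (HS i i Hi Hi) as (_&_&_&[D|D]); lra. }
  assert (Tnn: forall i, (i<n)%nat -> 0 <= T i).
  { intros i Hi. unfold T. pose proof (Dnn i Hi). pose proof (rsum_nonneg n (fun k => Eoff P i k * (x i + x k)^2) (fun k Hk => Enn i k Hi Hk) ).
    pose proof (pow2_ge_0 (x i)). nra. }
  pose proof (rsum_nonneg_zero n T Tnn Hsum) as T0.
  intros u w (Hu & Hw & [[Hne He] | [Heq HD]]).
  - specialize (T0 u Hu). unfold T in T0. pose proof (Dnn u Hu). pose proof (rsum_nonneg n (fun k => Eoff P u k * (x u + x k)^2) (fun k Hk => Enn u k Hu Hk)).
    pose proof (pow2_ge_0 (x u)).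
    assert (Z: rsum n (fun k => Eoff P u k * (x u + x k)^2) = 0) by nra.
    pose proof (rsum_nonneg_zero n (fun k => Eoff P u k * (x u + x k)^2) (fun k Hk => Enn u k Hu Hk) Z w Hw) as Zw. cbv beta in Zw.
    unfold Eoff in Zw. destruct (Nat.eqb_spec w u); [lia|]. rewrite He in Zw. nra.
  - subst w. specialize (T0 u Hu). unfold T in T0. rewrite HD in T0. pose proof (rsum_nonneg n (fun k => Eoff P u k * (x u + x k)^2) (fun k Hk => Enn u k Hu Hk)).
    pose proof (pow2_ge_0 (x u)). nra.
Qed.

Lemma gconn_lt n P a w : gconn n P a w -> (w < n)%nat.
Proof. induction 1; auto. destruct H0 as (_&H0&_); auto. Qed.

Lemma gconn_src n P a w : gconn n P a w -> (a < n)%nat.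
Proof. induction 1; auto. Qed.


Lemma prop_abs n P (x : nat -> R) : (forall u w, gedge n P u w -> x w = - x u) ->
  forall a w, gconn n P a w -> Rabs (x w) = Rabs (x a).
Proof. intros Hx a w H. induction H; auto. rewrite (Hx v w H0), Rabs_Ropp; auto. Qed.

Lemma prop_sgn n P (x : nat -> R) : (forall u w, gedge n P u w -> x w = - x u) ->
  forall a col w, bipartition n P a col -> gconn n P a w -> x w = sgn (col w) * sgn (col a) * x a.
Proof. intros Hx a col w Hb H. induction H as [Ha| v w Hv IH He].
  - unfold sgn; destruct (col a); ring.
  - rewrite (Hx v w He), IH. assert (col v <> col w) by (apply Hb; auto; eapply gconn_step; eauto).
    destruct (col v), (col w); try congruence; unfold sgn; ring. Qed.

Lemma prop_nonbip n P (x : nat -> R) : (forall u w, gedge n P u w -> x w = - x u) ->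
  forall a u, (a < n)%nat -> ~ comp_bipartite n P a -> gconn n P a u -> x u = 0.
Proof. intros Hx a u Ha Hnb Hu. destruct (Req_dec (x u) 0); auto. exfalso. apply Hnb.
  exists (fun w => if Rlt_dec 0 (x w) then true else false).
  intros u1 u2 H1 H2 He. pose proof (prop_abs n P x Hx a u1 H1). pose proof (prop_abs n P x Hx a u Hu).
  assert (Rabs (x u) > 0) by (apply Rabs_pos_lt; auto).
  assert (x u1 <> 0) by (intro E; rewrite E, Rabs_R0 in *; lra).
  rewrite (Hx u1 u2 He). destruct (Rlt_dec 0 (x u1)), (Rlt_dec 0 (- x u1)); intro Hc; first [discriminate | lra]. Qed.

Lemma PN0 n alpha l P X N :
  (forall t, 0 <= t -> is_inverse n (madd (Smat alpha l) (mscale t P)) (X t)) -> mlim_infty n X N ->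
  forall i j, (i<n)%nat -> (j<n)%nat -> rsum n (fun k => P i k * N k j) = 0.
Proof. intros HI HL i j Hi Hj.
  apply (lim_tf (fun t => rsum n (fun k => P i k * X t k j)) _ (idm i j - rsum n (fun k => Smat alpha l i k * N k j))).
  - apply (lim_rsum n (fun t k => P i k * X t k j) (fun k => P i k * N k j)). intros k Hk.
    apply (lim_mull (P i k) (fun t => X t k j) (N k j)). intros eps He. apply (HL k j Hk Hj eps He).
  - apply (lim_ext_ev 0 (fun t => idm i j - rsum n (fun k => Smat alpha l i k * X t k j))).
    + intros t Ht. cbv beta. destruct (HI t Ht i j Hi Hj) as [H1 _]. unfold mmul, madd, mscale in H1.
      rewrite <- H1.
      assert (rsum n (fun k => (Smat alpha l i k + t * P i k) * X t k j) = rsum n (fun k => Smat alpha l i k * X t k j) + t * rsum n (fun k => P i k * X t k j)) by (rewrite <- rsum_lin2; apply rsum_ext; intros; ring).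
      lra.
    + apply (lim_minus (fun _ => idm i j) (fun t => rsum n (fun k => Smat alpha l i k * X t k j))).
      apply lim_const.
      apply (lim_rsum n (fun t k => Smat alpha l i k * X t k j) (fun k => Smat alpha l i k * N k j)). intros k Hk.
      apply (lim_mull (Smat alpha l i k) (fun t => X t k j) (N k j)). intros eps He. apply (HL k j Hk Hj eps He).
Qed.

Lemma NP0 n alpha l P X N :
  (forall t, 0 <= t -> is_inverse n (madd (Smat alpha l) (mscale t P)) (X t)) -> mlim_infty n X N ->
  forall i j, (i<n)%nat -> (j<n)%nat -> rsum n (fun k => N i k * P k j) = 0.
Proof. intros HI HL i j Hi Hj.
  apply (lim_tf (fun t => rsum n (fun k => X t i k * P k j)) _ (idm i j - rsum n (fun k => N i k * Smat alpha l k j))).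
  - apply (lim_rsum n (fun t k => X t i k * P k j) (fun k => N i k * P k j)). intros k Hk.
    apply (lim_mulr (P k j) (fun t => X t i k) (N i k)). intros eps He. apply (HL i k Hi Hk eps He).
  - apply (lim_ext_ev 0 (fun t => idm i j - rsum n (fun k => X t i k * Smat alpha l k j))).
    + intros t Ht. cbv beta. destruct (HI t Ht i j Hi Hj) as [_ H1]. unfold mmul, madd, mscale in H1.
      rewrite <- H1.
      assert (rsum n (fun k => X t i k * (Smat alpha l k j + t * P k j)) = rsum n (fun k => X t i k * Smat alpha l k j) + t * rsum n (fun k => X t i k * P k j)) by (rewrite <- rsum_lin2; apply rsum_ext; intros; ring).
      lra.
    + apply (lim_minus (fun _ => idm i j) (fun t => rsum n (fun k => X t i k * Smat alpha l k j))).
      apply lim_const.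
      apply (lim_rsum n (fun t k => X t i k * Smat alpha l k j) (fun k => N i k * Smat alpha l k j)). intros k Hk.
      apply (lim_mulr (Smat alpha l k j) (fun t => X t i k) (N i k)). intros eps He. apply (HL i k Hi Hk eps He).
Qed.

Lemma bip_N n alpha l P X N a col : signless_laplacian n P ->
  (forall t, 0 <= t -> is_inverse n (madd (Smat alpha l) (mscale t P)) (X t)) -> mlim_infty n X N ->
  (a < n)%nat -> bipartition n P a col -> ~ (forall u v, (u<n)%nat -> (v<n)%nat -> N u v = 0).
Proof.
  intros HS HI HL Ha Hb Hz.
  set (s := fun w => if excluded_middle_informative (gconn n P a w) then sgn (col w) else 0).
  assert (Ps: forall i, (i<n)%nat -> rsum n (fun k => P i k * s k) = 0).
  { intros i Hi. rewrite (split_P n P s i Hi).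
    destruct (excluded_middle_informative (gconn n P a i)) as [Gi|Gi].
    - assert (HD: Defs.Delta n P i = 0).
      { destruct (HS i i Hi Hi) as (_&_&_&[D|D]); auto. exfalso.
        exact (Hb i i Gi Gi (conj Hi (conj Hi (or_intror (conj eq_refl D)))) eq_refl). }
      rewrite Delta_Eoff in HD by auto.
      rewrite (rsum_ext n (fun k => Eoff P i k * s k) (fun k => - s i * Eoff P i k)).
      + rewrite rsum_scal. replace (P i i) with (rsum n (Eoff P i)) by lra. ring.
      + intros k Hk. unfold Eoff. destruct (Nat.eqb_spec k i). ring.
        destruct (HS i k Hi Hk) as (Psym&H01&_). destruct (H01 (not_eq_sym n0)) as [E|E]; rewrite E; [ring|].
        assert (Hed: gedge n P i k) by (split; [auto|split; [auto|left; split; auto]]).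
        assert (Gk: gconn n P a k) by (eapply gconn_step; eauto).
        pose proof (Hb i k Gi Gk Hed) as Hne.
        unfold s. destruct (excluded_middle_informative (gconn n P a k)); [|contradiction].
        destruct (excluded_middle_informative (gconn n P a i)); [|contradiction].
        destruct (col i), (col k); try congruence; unfold sgn; ring.
    - assert (si: s i = 0) by (unfold s; destruct (excluded_middle_informative _); [contradiction|reflexivity]).
      rewrite si. rewrite rsum_zero. ring. intros k Hk. unfold Eoff. destruct (Nat.eqb_spec k i). ring.
      destruct (HS i k Hi Hk) as (Psym&H01&_). destruct (H01 (not_eq_sym n0)) as [E|E]; rewrite E; [ring|].
      assert (~ gconn n P a k).
      { intro Gk. apply Gi. eapply gconn_step; [exact Gk|]. split; [auto|split; [auto|left; split; auto]].
        rewrite <- Psym; auto. }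
      unfold s. destruct (excluded_middle_informative (gconn n P a k)); [contradiction|ring]. }
  set (c := fun j => rsum n (fun k => Smat alpha l j k * s k)).
  assert (Hc: forall t, 0 <= t -> rsum n (fun j => X t a j * c j) = s a).
  { intros t Ht.
    transitivity (rsum n (fun j => X t a j * rsum n (fun k => (Smat alpha l j k + t * P j k) * s k))).
    { apply rsum_ext; intros j Hj. unfold c. f_equal.
      assert (rsum n (fun k => (Smat alpha l j k + t * P j k) * s k) = rsum n (fun k => Smat alpha l j k * s k) + t * rsum n (fun k => P j k * s k)) by (rewrite <- rsum_lin2; apply rsum_ext; intros; ring).
      rewrite H, Ps by auto. ring. }
    rewrite (rsum_ext n _ (fun j => rsum n (fun k => X t a j * ((Smat alpha l j k + t * P j k) * s k))))
      by (intros j Hj; exact (eq_sym (rsum_scal n (X t a j) (fun k => (Smat alpha l j k + t * P j k) * s k)))).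
    rewrite rsum_swap.
    rewrite (rsum_ext n _ (fun k => idm a k * s k)).
    - apply rsum_delta; auto.
    - intros k Hk. cbv beta. destruct (HI t Ht a k Ha Hk) as [_ H2]. unfold mmul, madd, mscale in H2.
      rewrite <- H2. rewrite <- rsum_scalr. apply rsum_ext; intros; ring. }
  assert (HL1: lim (fun t => rsum n (fun j => X t a j * c j)) (rsum n (fun j => N a j * c j))).
  { apply (lim_rsum n (fun t j => X t a j * c j) (fun j => N a j * c j)). intros j Hj.
    apply (lim_mulr (c j) (fun t => X t a j) (N a j)). intros eps He; apply (HL a j Ha Hj eps He). }
  assert (HL2: lim (fun _ => s a) (rsum n (fun j => N a j * c j))).
  { apply (lim_ext_ev 0 (fun t => rsum n (fun j => X t a j * c j))); auto. }
  apply lim_unique_const in HL2.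
  rewrite rsum_zero in HL2 by (intros j Hj; rewrite Hz by auto; ring).
  revert HL2. unfold s. destruct (excluded_middle_informative (gconn n P a a)) as [G|G].
  - unfold sgn; destruct (col a); lra.
  - exfalso; apply G, gconn_refl, Ha.
Qed.

Theorem corollary4p4 (n : nat) (l alpha : R) (P : mat) (X : R -> mat) (N : mat) :
  (3 <= n)%nat -> 0 < l -> INR (n - 2) * l <= alpha ->
  signless_laplacian n P ->
  (forall t, 0 <= t -> is_inverse n (madd (Smat alpha l) (mscale t P)) (X t)) ->
  mlim_infty n X N ->
  (forall a b u v u' v', gconn n P a u -> gconn n P a u' ->
      gconn n P b v -> gconn n P b v' -> Rabs (N u v) = Rabs (N u' v')) /\
  (forall a, (a < n)%nat -> ~ comp_bipartite n P a ->
      forall u v, gconn n P a u -> (v < n)%nat -> N u v = 0 /\ N v u = 0) /\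
  ((forall u v, (u < n)%nat -> (v < n)%nat -> N u v = 0) <->
      (forall a, (a < n)%nat -> ~ comp_bipartite n P a)) /\
  (forall a b cola colb, (a < n)%nat -> (b < n)%nat ->
      bipartition n P a cola -> bipartition n P b colb ->
      exists c : R, forall u v, gconn n P a u -> gconn n P b v ->
        N u v = c * sgn (cola u) * sgn (colb v)).
Proof.
  intros Hn Hl Hal HS HI HL.
  assert (Hcol: forall v, (v<n)%nat -> forall u w, gedge n P u w -> N w v = - N u v).
  { intros v Hv. apply (kernel n P (fun k => N k v) HS). intros i Hi.
    apply (PN0 n alpha l P X N HI HL i v Hi Hv). }
  assert (Hrow: forall u, (u<n)%nat -> forall w w', gedge n P w w' -> N u w' = - N u w).
  { intros u Hu. apply (kernel n P (fun k => N u k) HS). intros i Hi.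
    rewrite <- (NP0 n alpha l P X N HI HL u i Hu Hi). apply rsum_ext. intros k Hk.
    destruct (HS i k Hi Hk) as [E _]. rewrite E. ring. }
  split; [|split; [|split]].
  - intros a b u v u' v' Hu Hu' Hv Hv'.
    pose proof (gconn_lt _ _ _ _ Hv) as Lv. pose proof (gconn_lt _ _ _ _ Hv') as Lv'.
    pose proof (gconn_src _ _ _ _ Hu) as La.
    assert (A1: Rabs (N u v) = Rabs (N a v)) by exact (prop_abs n P (fun k => N k v) (Hcol v Lv) a u Hu).
    assert (A2: Rabs (N a v) = Rabs (N a b)) by exact (prop_abs n P (fun k => N a k) (Hrow a La) b v Hv).
    assert (A3: Rabs (N u' v') = Rabs (N a v')) by exact (prop_abs n P (fun k => N k v') (Hcol v' Lv') a u' Hu').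
    assert (A4: Rabs (N a v') = Rabs (N a b)) by exact (prop_abs n P (fun k => N a k) (Hrow a La) b v' Hv').
    congruence.
  - intros a Ha Hnb u v Hu Hv. split.
    + exact (prop_nonbip n P (fun k => N k v) (Hcol v Hv) a u Ha Hnb Hu).
    + exact (prop_nonbip n P (fun k => N v k) (Hrow v Hv) a u Ha Hnb Hu).
  - split.
    + intros Hz a Ha [col Hb]. exact (bip_N n alpha l P X N a col HS HI HL Ha Hb Hz).
    + intros Hnb u v Hu Hv.
      exact (prop_nonbip n P (fun k => N k v) (Hcol v Hv) u u Hu (Hnb u Hu) (gconn_refl n P u Hu)).
  - intros a b cola colb Ha Hb HA HB. exists (sgn (cola a) * sgn (colb b) * N a b). intros u v Hu Hv.
    assert (E1: N u v = sgn (cola u) * sgn (cola a) * N a v)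
      by exact (prop_sgn n P (fun k => N k v) (Hcol v (gconn_lt _ _ _ _ Hv)) a cola u HA Hu).
    assert (E2: N a v = sgn (colb v) * sgn (colb b) * N a b)
      by exact (prop_sgn n P (fun k => N a k) (Hrow a Ha) b colb v HB Hv).
    rewrite E1, E2. ring.
Qed.
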